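(* Let $\lambda>0$ and $P(A)=\sum_{1\le i<j\le3}\lambda_i(A)\lambda_j(A)-\lambda\sum_{i=1}^3\lambda_i(A)$ for $A\in\mathbb{R}^{3\times3}$. Then (a) $\lambda\mathbf{1}$ is a point of rank-one convexity of $P$, i.e. for all $a,n\in\mathbb{R}^3$ the function $t\mapsto P(\lambda\mathbf{1}+t\,a\otimes n)$ is convex on $\mathbb{R}$; but (b) $P$ is not polyconvex at $\lambda\mathbf{1}$, i.e. there is no $(C_1,C_2,C_3)\in\mathbb{R}^{3\times3}\times\mathbb{R}^{3\times3}\times\mathbb{R}$ such that $P(A)\ge P(\lambda\mathbf{1})+C_1\cdot(A-\lambda\mathbf{1})+C_2\cdot(\operatorname{cof}A-\lambda^2\mathbf{1})+C_3(\det A-\lambda^3)$ for all $A\in\mathbb{R}^{3\times3}$.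
   Context: $\lambda_1(A),\lambda_2(A),\lambda_3(A)$ denote the singular values of $A$ (square roots of the eigenvalues of $A^TA$); $\mathbf{1}$ is the $3\times3$ identity; $A\cdot B=\operatorname{tr}(A^TB)$; $\operatorname{cof}A$ is the cofactor matrix; $a\otimes n$ is the matrix with entries $a_in_j$. *)

(* Defs.v *)
From HB Require Import structures.
From mathcomp Require Import all_boot all_order all_algebra.
From mathcomp Require Import boolp classical_sets reals.
Set Implicit Arguments. Unset Strict Implicit. Unset Printing Implicit Defensive.
Import Order.TTheory GRing.Theory Num.Theory.
Local Open Scope ring_scope.

Section Defs.
Variable R : realType.

(* s = (s1,s2,s3) is a list (with multiplicity) of the singular values of A:
   nonnegative reals whose squares are the eigenvalues of A^T A (counted with
   multiplicity), i.e. the roots of the characteristic polynomial of A^T A. *)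
Definition singular_values_spec (A : 'M[R]_3) (s : R * R * R) : Prop :=
  [/\ 0 <= s.1.1, 0 <= s.1.2, 0 <= s.2 &
      char_poly (A^T *m A) =
        ('X - (s.1.1 ^+ 2)%:P) * ('X - (s.1.2 ^+ 2)%:P) * ('X - (s.2 ^+ 2)%:P)].

Definition singvals (A : 'M[R]_3) : R * R * R :=
  xget (0, 0, 0) (singular_values_spec A).

Definition sv1 (A : 'M[R]_3) : R := (singvals A).1.1.
Definition sv2 (A : 'M[R]_3) : R := (singvals A).1.2.
Definition sv3 (A : 'M[R]_3) : R := (singvals A).2.

Definition Pfun (lam : R) (A : 'M[R]_3) : R :=
  sv1 A * sv2 A + sv1 A * sv3 A + sv2 A * sv3 A
  - lam * (sv1 A + sv2 A + sv3 A).

Definition frob (A B : 'M[R]_3) : R := \tr (A^T *m B).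

Definition cofmx (A : 'M[R]_3) : 'M[R]_3 := \matrix_(i, j) cofactor A i j.

Definition tensor (a n : 'cV[R]_3) : 'M[R]_3 := \matrix_(i, j) (a i 0 * n j 0).

Definition convex_on_R (f : R -> R) : Prop :=
  forall (x y t : R), 0 <= t -> t <= 1 ->
    f (t * x + (1 - t) * y) <= t * f x + (1 - t) * f y.

End Defs.

(* Main.v *)
Require Import Defs.
From HB Require Import structures.
From mathcomp Require Import all_boot all_order all_algebra.
From mathcomp Require Import boolp classical_sets reals.
From mathcomp Require Import ring lra.
Import Order.TTheory GRing.Theory Num.Theory.
Set Implicit Arguments. Unset Strict Implicit. Unset Printing Implicit Defensive.
Local Open Scope ring_scope.

Definition o0 : 'I_3 := @Ordinal 3 0 isT.
Definition o1 : 'I_3 := @Ordinal 3 1 isT.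
Definition o2 : 'I_3 := @Ordinal 3 2 isT.

Lemma sum3 (V : zmodType) (F : 'I_3 -> V) : \sum_i F i = F o0 + F o1 + F o2.
Proof.
rewrite !big_ord_recl big_ord0 addr0 addrA.
by congr (F _ + F _ + F _); apply: val_inj.
Qed.

Lemma natify (T : Type) (A : 'I_3 -> 'I_3 -> T) :
  exists f : nat -> nat -> T, forall i j : 'I_3, A i j = f i j.
Proof. by exists (fun i j => A (inord i) (inord j)) => i j; rewrite !inord_val. Qed.

Lemma natifyn n (T : Type) (A : 'I_n.+1 -> 'I_n.+1 -> T) :
  exists f : nat -> nat -> T, forall i j : 'I_n.+1, A i j = f i j.
Proof. by exists (fun i j => A (inord i) (inord j)) => i j; rewrite !inord_val. Qed.

Lemma det3 (T : comNzRingType) (A : 'M[T]_3) : \det A =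
  A o0 o0 * (A o1 o1 * A o2 o2 - A o1 o2 * A o2 o1)
  - A o0 o1 * (A o1 o0 * A o2 o2 - A o1 o2 * A o2 o0)
  + A o0 o2 * (A o1 o0 * A o2 o1 - A o1 o1 * A o2 o0).
Proof.
rewrite (expand_det_row _ o0) sum3 /cofactor.
rewrite !(expand_det_row _ ord0) !big_ord_recl !big_ord0 /cofactor.
rewrite !det_mx11 !mxE /=.
have [f hf] := natify (fun i j => A i j).
rewrite !hf /=.
rewrite /bump /=. ring.
Qed.

Definition c1 (T : comNzRingType) (M : 'M[T]_3) := M o0 o0 + M o1 o1 + M o2 o2.
Definition c2 (T : comNzRingType) (M : 'M[T]_3) :=
  M o0 o0 * M o1 o1 - M o0 o1 * M o1 o0 + M o0 o0 * M o2 o2 - M o0 o2 * M o2 o0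
  + M o1 o1 * M o2 o2 - M o1 o2 * M o2 o1.

Lemma charpoly3 (T : comNzRingType) (M : 'M[T]_3) :
  char_poly M = 'X^3 - (c1 M)%:P * 'X^2 + (c2 M)%:P * 'X - (\det M)%:P.
Proof.
rewrite /char_poly det3 !det3 /char_poly_mx /c1 /c2 !mxE /=.
have [f hf] := natify (fun i j => M i j).
rewrite !hf /=.
rewrite !mulr1n !mulr0n.
ring.
Qed.
Section U.
Variable R : realFieldType.

Lemma sq_inj (a b : R) : 0 <= a -> 0 <= b -> a ^+ 2 = b ^+ 2 -> a = b.
Proof. by move=> ha hb /eqP; rewrite eqrXn2 // => /eqP. Qed.

Lemma core3 (a1 a2 a3 b2 b3 : R) : 0 <= a2 -> 0 <= a3 -> 0 <= b2 -> 0 <= b3 ->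
  a1^+2 + a2^+2 + a3^+2 = a1^+2 + b2^+2 + b3^+2 ->
  a1^+2*a2^+2 + a1^+2*a3^+2 + a2^+2*a3^+2 = a1^+2*b2^+2 + a1^+2*b3^+2 + b2^+2*b3^+2 ->
  a1 + a2 + a3 = a1 + b2 + b3 /\ a1*a2 + a1*a3 + a2*a3 = a1*b2 + a1*b3 + b2*b3.
Proof.
move=> h2 h3 g2 g3 H1 H2.
have S : a2^+2 + a3^+2 = b2^+2 + b3^+2 by lra.
have P2 : a2^+2*a3^+2 = b2^+2*b3^+2.
  have : a1^+2*(a2^+2 + a3^+2) + a2^+2*a3^+2 = a1^+2*(b2^+2 + b3^+2) + b2^+2*b3^+2.
    by rewrite !mulrDr.
  by rewrite S => /addrI.
have P : a2*a3 = b2*b3.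
  by apply: sq_inj; rewrite ?mulr_ge0 // !exprMn.
have Q : a2 + a3 = b2 + b3.
  apply: sq_inj; rewrite ?addr_ge0 //.
  have -> : (a2 + a3)^+2 = a2^+2 + a3^+2 + 2 * (a2*a3) by ring.
  have -> : (b2 + b3)^+2 = b2^+2 + b3^+2 + 2 * (b2*b3) by ring.
  by rewrite S P.
split; first by rewrite -!addrA Q.
have -> : a1*a2 + a1*a3 + a2*a3 = a1*(a2+a3) + a2*a3 by ring.
have -> : a1*b2 + a1*b3 + b2*b3 = a1*(b2+b3) + b2*b3 by ring.
by rewrite Q P.
Qed.

Lemma uniq3 (a1 a2 a3 b1 b2 b3 : R) :
  0 <= a1 -> 0 <= a2 -> 0 <= a3 -> 0 <= b1 -> 0 <= b2 -> 0 <= b3 ->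
  a1^+2 + a2^+2 + a3^+2 = b1^+2 + b2^+2 + b3^+2 ->
  a1^+2*a2^+2 + a1^+2*a3^+2 + a2^+2*a3^+2 = b1^+2*b2^+2 + b1^+2*b3^+2 + b2^+2*b3^+2 ->
  a1^+2*a2^+2*a3^+2 = b1^+2*b2^+2*b3^+2 ->
  a1 + a2 + a3 = b1 + b2 + b3 /\ a1*a2 + a1*a3 + a2*a3 = b1*b2 + b1*b3 + b2*b3.
Proof.
move=> h1 h2 h3 g1 g2 g3 H1 H2 H3.
have E : (a1^+2 - b1^+2) * (a1^+2 - b2^+2) * (a1^+2 - b3^+2) = 0.
  have -> : (a1^+2 - b1^+2) * (a1^+2 - b2^+2) * (a1^+2 - b3^+2) =
    a1^+2^+3 - (b1^+2 + b2^+2 + b3^+2) * a1^+2^+2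
    + (b1^+2*b2^+2 + b1^+2*b3^+2 + b2^+2*b3^+2) * a1^+2 - b1^+2*b2^+2*b3^+2 by ring.
  rewrite -H1 -H2 -H3; ring.
move/eqP: E; rewrite !mulf_eq0 !subr_eq0 => /orP[/orP[]|] /eqP E.
- have e : a1 = b1 by apply: sq_inj.
  subst b1. by apply: core3 => //; lra.
- have e : a1 = b2 by apply: sq_inj.
  subst b2. have [X Y] := @core3 a1 a2 a3 b1 b3 h2 h3 g1 g3 ltac:(lra) ltac:(lra).
  split; lra.
- have e : a1 = b3 by apply: sq_inj.
  subst b3. have [X Y] := @core3 a1 a2 a3 b1 b2 h2 h3 g1 g2 ltac:(lra) ltac:(lra).
  split; lra.
Qed.
End U.

Section S.
Variable R : realType.

Lemma spec_fwd (A : 'M[R]_3) (s : R * R * R) : singular_values_spec A s ->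
  [/\ c1 (A^T *m A) = s.1.1^+2 + s.1.2^+2 + s.2^+2,
      c2 (A^T *m A) = s.1.1^+2*s.1.2^+2 + s.1.1^+2*s.2^+2 + s.1.2^+2*s.2^+2 &
      \det (A^T *m A) = s.1.1^+2*s.1.2^+2*s.2^+2].
Proof.
case=> _ _ _; rewrite charpoly3.
set a := s.1.1^+2; set b := s.1.2^+2; set c := s.2^+2.
set u := c1 _; set v := c2 _; set w := \det _ => H.
clearbody a b c u v w.
have h x := congr1 (fun p => p.[x]) H.
have h0 := h 0; have h1 := h 1; have h2 := h (-1).
rewrite /= !hornerE /= in h0 h1 h2.
split; nra.
Qed.

Lemma spec_bwd (A : 'M[R]_3) (s : R * R * R) :
  0 <= s.1.1 -> 0 <= s.1.2 -> 0 <= s.2 ->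
  c1 (A^T *m A) = s.1.1^+2 + s.1.2^+2 + s.2^+2 ->
  c2 (A^T *m A) = s.1.1^+2*s.1.2^+2 + s.1.1^+2*s.2^+2 + s.1.2^+2*s.2^+2 ->
  \det (A^T *m A) = s.1.1^+2*s.1.2^+2*s.2^+2 ->
  singular_values_spec A s.
Proof.
move=> g1 g2 g3 e1 e2 e3; split => //.
rewrite charpoly3 e1 e2 e3; ring.
Qed.

Lemma Pfun_val (lam : R) (A : 'M[R]_3) (x y z : R) :
  singular_values_spec A (x, y, z) ->
  Pfun lam A = x*y + x*z + y*z - lam * (x + y + z).
Proof.
move=> hs.
have hs' : singular_values_spec A (singvals A) by apply: xgetPex; exists (x, y, z).
have [g1 g2 g3 _] := hs'.
have [h1 h2 h3 _] := hs.
have [e1 e2 e3] := spec_fwd hs; have [f1 f2 f3] := spec_fwd hs'.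
rewrite /= in e1 e2 e3 h1 h2 h3.
have [E1 E2] := @uniq3 _ _ _ _ x y z g1 g2 g3 h1 h2 h3
   ltac:(by rewrite -f1 e1) ltac:(by rewrite -f2 e2) ltac:(by rewrite -f3 e3).
by rewrite /Pfun /sv1 /sv2 /sv3 E1 E2.
Qed.
End S.

Section B.
Variable R : realType.

Definition Dg (x y z : R) : 'M[R]_3 :=
  \matrix_(i, j) (if (i : nat) == j then nth 0 [:: x; y; z] i else 0).

Lemma nK (x : R) : `|x| ^+ 2 = x ^+ 2.
Proof. exact: real_normK (num_real x). Qed.

Lemma det2 (T : comNzRingType) (A : 'M[T]_2) :
  \det A = A ord0 ord0 * A ord_max ord_max - A ord0 ord_max * A ord_max ord0.
Proof.
rewrite (expand_det_row _ ord0) !big_ord_recl big_ord0 /cofactor !det_mx11 !mxE /=.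
have [f hf] := natifyn (fun i j : 'I_2 => A i j).
rewrite !hf /bump /=; ring.
Qed.

Ltac crunch := rewrite /c1 /c2 ?det3 /frob /mxtrace /cofmx /cofactor; rewrite ?sum3 ?mxE ?sum3 ?mxE /=.

Lemma Dg_spec (x y z : R) : singular_values_spec (Dg x y z) (`|x|, `|y|, `|z|).
Proof.
apply: spec_bwd => //=; rewrite ?normr_ge0 // ?det_mulmx ?det_tr; crunch; rewrite !nK; ring.
Qed.

Lemma Dg_P lam (x y z : R) : Pfun lam (Dg x y z) =
  `|x|*`|y| + `|x|*`|z| + `|y|*`|z| - lam * (`|x| + `|y| + `|z|).
Proof. exact: Pfun_val (Dg_spec x y z). Qed.

Lemma Dg_lin (C1 C2 : 'M[R]_3) (C3 lam x y z : R) :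
  frob C1 (Dg x y z - lam%:M) + frob C2 (cofmx (Dg x y z) - (lam ^+ 2)%:M) + C3 * (\det (Dg x y z) - lam ^+ 3)
  = C1 o0 o0 * (x - lam) + C1 o1 o1 * (y - lam) + C1 o2 o2 * (z - lam)
  + C2 o0 o0 * (y * z - lam^+2) + C2 o1 o1 * (x * z - lam^+2) + C2 o2 o2 * (x * y - lam^+2)
  + C3 * (x * y * z - lam ^+ 3).
Proof. crunch. rewrite !det2 !mxE /bump /=. ring. Qed.

Lemma Dg_lin4 (C1 C2 : 'M[R]_3) (C3 lam x y z p : R) :
  p + frob C1 (Dg x y z - lam%:M) + frob C2 (cofmx (Dg x y z) - (lam ^+ 2)%:M) + C3 * (\det (Dg x y z) - lam ^+ 3)
  = p + (C1 o0 o0 * (x - lam) + C1 o1 o1 * (y - lam) + C1 o2 o2 * (z - lam)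
  + C2 o0 o0 * (y * z - lam^+2) + C2 o1 o1 * (x * z - lam^+2) + C2 o2 o2 * (x * y - lam^+2)
  + C3 * (x * y * z - lam ^+ 3)).
Proof. by rewrite -Dg_lin !addrA. Qed.

Lemma scal_Dg (lam : R) : lam%:M = Dg lam lam lam.
Proof.
apply/matrixP => i j; rewrite !mxE.
by case: i => [[|[|[|?]]] ?]; case: j => [[|[|[|?]]] ?].
Qed.

Lemma partb (lam : R) : 0 < lam ->
  ~ (exists (C1 C2 : 'M[R]_3) (C3 : R),
       forall A : 'M[R]_3,
         Pfun lam (lam%:M : 'M[R]_3) + frob C1 (A - lam%:M)
         + frob C2 (cofmx A - (lam ^+ 2)%:M) + C3 * (\det A - lam ^+ 3)
         <= Pfun lam A).
Proof.
move=> hl [C1 [C2 [C3 H]]].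
have nl : `|lam| = lam by rewrite ger0_norm // ltW.
have n4 : `|4 * lam| = 4 * lam by rewrite ger0_norm // mulr_ge0 // ltW.
have n2 : `|- (2 * lam)| = 2 * lam by rewrite normrN ger0_norm // mulr_ge0 // ltW.
have P0 : Pfun lam (lam%:M) = 0 by rewrite scal_Dg Dg_P nl; ring.
have h1 := H (Dg lam lam (4 * lam)).
have h2 := H (Dg (4 * lam) 0 0).
have h3 := H (Dg 0 (4 * lam) 0).
have h4 := H (Dg (- (2 * lam)) (- (2 * lam)) 0).
rewrite Dg_lin4 P0 !Dg_P ?nl ?n4 ?n2 ?normr0 in h1.
rewrite Dg_lin4 P0 !Dg_P ?nl ?n4 ?n2 ?normr0 in h2.
rewrite Dg_lin4 P0 !Dg_P ?nl ?n4 ?n2 ?normr0 in h3.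
rewrite Dg_lin4 P0 !Dg_P ?nl ?n4 ?n2 ?normr0 in h4.
have l2 : 0 < lam * lam by rewrite mulr_gt0.
nra.
Qed.

End B.

Section A.
Variable R : realType.

Lemma natv (a : 'cV[R]_3) : exists f : nat -> R, forall i : 'I_3, a i 0 = f i.
Proof. by exists (fun i => a (inord i) 0) => i; rewrite inord_val. Qed.

Definition dotp (a n : 'cV[R]_3) := a o0 0 * n o0 0 + a o1 0 * n o1 0 + a o2 0 * n o2 0.
Definition nrm2 (a : 'cV[R]_3) := a o0 0 ^+ 2 + a o1 0 ^+ 2 + a o2 0 ^+ 2.

Lemma line_c (lam t : R) (a n : 'cV[R]_3) :
  let A := lam%:M + t *: tensor a n in
  let S := 2 * lam^+2 + 2 * lam * t * dotp a n + t^+2 * (nrm2 a * nrm2 n) in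
  let D := lam^+2 + lam * t * dotp a n in
  [/\ c1 (A^T *m A) = lam^+2 + S, c2 (A^T *m A) = lam^+2 * S + D^+2 &
      \det (A^T *m A) = lam^+2 * D^+2].
Proof.
move=> A S D.
rewrite det_mulmx det_tr /c1 /c2 /A /S /D /dotp /nrm2 /tensor det3 !mxE !sum3 !mxE /=.
have [fa ha] := natv a; have [fn hn] := natv n.
rewrite !ha !hn.
split; ring.
Qed.

Lemma cs_ineq (a n : 'cV[R]_3) : dotp a n ^+ 2 <= nrm2 a * nrm2 n.
Proof.
rewrite /dotp /nrm2.
set a0 := a o0 0; set a1 := a o1 0; set a2 := a o2 0.
set n0 := n o0 0; set n1 := n o1 0; set n2 := n o2 0.
rewrite -subr_ge0.
have -> : (a0 ^+ 2 + a1 ^+ 2 + a2 ^+ 2) * (n0 ^+ 2 + n1 ^+ 2 + n2 ^+ 2) -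
  (a0 * n0 + a1 * n1 + a2 * n2) ^+ 2 =
  (a0 * n1 - a1 * n0) ^+ 2 + (a0 * n2 - a2 * n0) ^+ 2 + (a1 * n2 - a2 * n1) ^+ 2 by ring.
by rewrite !addr_ge0 // sqr_ge0.
Qed.

Lemma line_P (lam t : R) (a n : 'cV[R]_3) : 0 <= lam ->
  Pfun lam (lam%:M + t *: tensor a n) = `|lam^+2 + lam * t * dotp a n| - lam^+2.
Proof.
move=> hl.
have [e1 e2 e3] := line_c lam t a n.
set S := 2 * lam^+2 + 2 * lam * t * dotp a n + t^+2 * (nrm2 a * nrm2 n) in e1 e2 e3.
set D := lam^+2 + lam * t * dotp a n in e2 e3 *.
have cs := cs_ineq a n.
have hS1 : 0 <= S - 2 * `|D|.
  have hm : 0 <= S - 2 * D.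
    have -> : S - 2 * D = t^+2 * (nrm2 a * nrm2 n) by rewrite /S /D; ring.
    by rewrite mulr_ge0 ?sqr_ge0 // (le_trans (sqr_ge0 (dotp a n))).
  have hp : 0 <= S + 2 * D.
    have -> : S + 2 * D = (2 * lam + t * dotp a n) ^+ 2
       + t^+2 * (nrm2 a * nrm2 n - dotp a n ^+ 2) by rewrite /S /D; ring.
    by rewrite addr_ge0 ?sqr_ge0 // mulr_ge0 ?sqr_ge0 // subr_ge0.
  case: (lerP 0 D) => hD; [rewrite ger0_norm // | rewrite ltr0_norm //]; lra.
have hS2 : 0 <= S + 2 * `|D| by have := normr_ge0 D; lra.
set u := Num.sqrt (S + 2 * `|D|); set v := Num.sqrt (S - 2 * `|D|).
have hu : u ^+ 2 = S + 2 * `|D| by rewrite sqr_sqrtr.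
have hv : v ^+ 2 = S - 2 * `|D| by rewrite sqr_sqrtr.
have vu : v <= u by apply: ler_wsqrtr; have := normr_ge0 D; lra.
have v0 : 0 <= v by apply: sqrtr_ge0.
set s1 := (u + v) / 2; set s2 := (u - v) / 2.
have Sg : s1 ^+ 2 + s2 ^+ 2 = S.
  have -> : s1 ^+ 2 + s2 ^+ 2 = (u^+2 + v^+2) / 2 by rewrite /s1 /s2; field; lra.
  rewrite hu hv; field; lra.
have Pr : s1 * s2 = `|D|.
  have -> : s1 * s2 = (u^+2 - v^+2) / 4 by rewrite /s1 /s2; field; lra.
  rewrite hu hv; field; lra.
have nD : `|D| ^+ 2 = D ^+ 2 by exact: real_normK (num_real D).
have P2 : s1 ^+ 2 * s2 ^+ 2 = D ^+ 2 by rewrite -exprMn Pr nD.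
have hs : singular_values_spec (lam%:M + t *: tensor a n) (lam, s1, s2).
  apply: spec_bwd => /=; first exact: hl.
  - rewrite /s1; lra.
  - rewrite /s2; lra.
  - by rewrite e1 -Sg addrA.
  - by rewrite e2 -Sg -P2; ring.
  - by rewrite e3 -P2; ring.
rewrite (Pfun_val lam hs) -Pr; ring.
Qed.

Lemma parta (lam : R) : 0 < lam -> forall a n : 'cV[R]_3,
     convex_on_R (fun t : R => Pfun lam (lam%:M + t *: tensor a n)).
Proof.
move=> hl a n x y t h0 h1 /=; have hl' := ltW hl; rewrite !line_P //.
set p := dotp a n.
have -> : lam ^+ 2 + lam * (t * x + (1 - t) * y) * p =
  t * (lam ^+ 2 + lam * x * p) + (1 - t) * (lam ^+ 2 + lam * y * p) by ring.
have h := ler_normD (t * (lam ^+ 2 + lam * x * p)) ((1 - t) * (lam ^+ 2 + lam * y * p)).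
have h1' : 0 <= 1 - t by lra.
rewrite !normrM (ger0_norm h0) (ger0_norm h1') in h.
lra.
Qed.

End A.

Theorem proposition2p3 (R : realType) (lam : R) (hlam : 0 < lam) :
  (forall a n : 'cV[R]_3,
     convex_on_R (fun t : R => Pfun lam (lam%:M + t *: tensor a n)))
  /\
  ~ (exists (C1 C2 : 'M[R]_3) (C3 : R),
       forall A : 'M[R]_3,
         Pfun lam (lam%:M : 'M[R]_3) + frob C1 (A - lam%:M)
         + frob C2 (cofmx A - (lam ^+ 2)%:M) + C3 * (\det A - lam ^+ 3)
         <= Pfun lam A).
Proof. split; [exact: parta | exact: partb]. Qed.
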